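(* Let $q$ be a power of an odd prime $p$ such that $8\mid q-1$ and $\sqrt{2}\in\mathbb{F}_q$, and let $\mathfrak{C}/\mathbb{F}_q$ be the genus $2$ hyperelliptic curve $y^2=x^5+x$. (i) If $p\neq 3,5$, then $\mathrm{Aut}(\mathfrak{C}/\mathbb{F}_q)\simeq\tilde{S}_4$ (in particular $\mathrm{Aut}(\mathfrak{C}/\mathbb{F}_q)=\mathrm{Aut}(\mathfrak{C})$, of order $48$). (ii) If $p=5$, then $\mathrm{Aut}(\mathfrak{C}/\mathbb{F}_q)\simeq\tilde{S}_5$ (in particular $\mathrm{Aut}(\mathfrak{C}/\mathbb{F}_q)=\mathrm{Aut}(\mathfrak{C})$, of order $240$).
   Context: For a genus $2$ curve $\mathfrak{C}:y^2=f(x)$ over $\mathbb{F}_q$ ($q$ odd), automorphisms of $\mathfrak{C}$ over $\overline{\mathbb{F}}_q$ correspond to matrices $M=\begin{pmatrix}a&b\\c&d\end{pmatrix}\in\mathrm{GL}_2(\overline{\mathbb{F}}_q)$ acting by $x\mapsto \frac{ax+b}{cx+d}$, $y\mapsto \frac{(ad-bc)y}{(cx+d)^3}$ (and preserving the curve). $\mathrm{Aut}(\mathfrak{C})$ denotes the full automorphism group over $\overline{\mathbb{F}}_q$ (including the hyperelliptic involution, corresponding to $-I$), and $\mathrm{Aut}(\mathfrak{C}/\mathbb{F}_q)$ its subgroup of automorphisms whose matrix has entries in $\mathbb{F}_q$. $\tilde{S}_4$ denotes the group of order $48$ (a double cover of $S_4$) which is the full automorphism group over $\overline{\mathbb{F}}_p$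 of $y^2=x^5-x$ for $p\neq 2,3,5$; $\tilde{S}_5$ denotes the group of order $240$ which is the full automorphism group over $\overline{\mathbb{F}}_5$ of $y^2=x^5-x$. *)

(* Defs.v *)
From HB Require Import structures.
From mathcomp Require Import all_boot all_order all_algebra all_fingroup all_field.
Set Implicit Arguments. Unset Strict Implicit. Unset Printing Implicit Defensive.
Import GRing.Theory.
Local Open Scope ring_scope.

(* Genus 2 curve y^2 = f(x), deg f <= 6.  A matrix M = [[a,b],[c,d]]
   acts by x |-> (ax+b)/(cx+d), y |-> (ad-bc) y/(cx+d)^3.  It maps the
   curve to itself iff M is invertible and
     (cx+d)^6 f((ax+b)/(cx+d)) = (ad-bc)^2 f(x),
   i.e. (homogenising f in degree 6)
     sum_{i<=6} f_i (aX+b)^i (cX+d)^(6-i) = det(M)^2 f(X). *)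
Definition is_aut_mx (K : fieldType) (f : {poly K}) (M : 'M[K]_2) : bool :=
  let a := M 0 0 in let b := M 0 1 in let c := M 1 0 in let d := M 1 1 in
  (\det M != 0) &&
  (\sum_(i < 7) f`_i *: ((a *: 'X + b%:P) ^+ i * (c *: 'X + d%:P) ^+ (6 - i))
     == (\det M) ^+ 2 *: f).

Definition aut_set (F : finFieldType) (f : {poly F}) : {set 'M[F]_2} :=
  [set M | is_aut_mx f M].

Definition is_alg_closure (F : fieldType) (L : closedFieldType)
    (iota : {rmorphism F -> L}) : Prop :=
  forall x : L, exists2 P : {poly F}, P != 0 & root (map_poly iota P) x.

Definition all_auts_rational (F : finFieldType) (f : {poly F}) (L : fieldType)
    (iota : {rmorphism F -> L}) : Prop :=
  forall M : 'M[L]_2, is_aut_mx (map_poly iota f) M ->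
    exists2 N, N \in aut_set f & M = map_mx iota N.

Definition aut_iso_to (F : finFieldType) (f : {poly F}) (L : fieldType)
    (g : {poly L}) : Prop :=
  exists phi : 'M[F]_2 -> 'M[L]_2,
    [/\ {in aut_set f &, forall M N, phi (M *m N) = phi M *m phi N},
        {in aut_set f &, injective phi} &
        forall M : 'M[L]_2, is_aut_mx g M <-> exists2 N, N \in aut_set f & M = phi N].

(* Main.v *)
Require Import Defs.
From HB Require Import structures.
From mathcomp Require Import all_boot all_order all_algebra all_fingroup all_solvable all_field.
From mathcomp Require Import ring zify.
Set Implicit Arguments. Unset Strict Implicit. Unset Printing Implicit Defensive.
Import GRing.Theory.
Local Open Scope ring_scope.

Section Mx2.
Variable K : comNzRingType.
Definition mx2 (a b c d : K) : 'M[K]_2 :=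
  \matrix_(i < 2, j < 2) if i == 0 then (if j == 0 then a else b) else (if j == 0 then c else d).
Lemma mx2E00 a b c d : mx2 a b c d 0 0 = a. Proof. by rewrite mxE. Qed.
Lemma mx2E01 a b c d : mx2 a b c d 0 1 = b. Proof. by rewrite mxE. Qed.
Lemma mx2E10 a b c d : mx2 a b c d 1 0 = c. Proof. by rewrite mxE. Qed.
Lemma mx2E11 a b c d : mx2 a b c d 1 1 = d. Proof. by rewrite mxE. Qed.
Lemma mx2_eta (M : 'M[K]_2) : M = mx2 (M 0 0) (M 0 1) (M 1 0) (M 1 1).
Proof. by apply/matrixP=> i j; rewrite mxE; case: i => [[|[|//]] ?]; case: j => [[|[|//]] ?] /=;
  congr (M _ _); apply/val_inj. Qed.
Lemma mx2_inj a b c d a' b' c' d' : mx2 a b c d = mx2 a' b' c' d' ->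
  [/\ a = a', b = b', c = c' & d = d'].
Proof. move=> E; split.
- by rewrite -(mx2E00 a b c d) E mx2E00.
- by rewrite -(mx2E01 a b c d) E mx2E01.
- by rewrite -(mx2E10 a b c d) E mx2E10.
- by rewrite -(mx2E11 a b c d) E mx2E11.
Qed.
Lemma det_mx2 a b c d : \det (mx2 a b c d) = a * d - b * c.
Proof.
rewrite (expand_det_row _ 0) !big_ord_recr big_ord0 /= add0r.
rewrite /cofactor !det_mx11 !mxE /=.
rewrite /bump /=. rewrite !expr0 !expr1 !mul1r. ring.
Qed.
Lemma mul_mx2 a b c d a' b' c' d' :
  mx2 a b c d *m mx2 a' b' c' d' = mx2 (a*a' + b*c') (a*b' + b*d') (c*a' + d*c') (c*b'+d*d').
Proof.
apply/matrixP=> i j; rewrite !mxE !big_ord_recr big_ord0 /= add0r !mxE /=.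
by case: i => [[|[|//]] ?]; case: j => [[|[|//]] ?].
Qed.
End Mx2.
Lemma cert0 (K : fieldType) (h2 : (2%:R : K) != 0) (k : nat) (x y   : K)  :
  2%:R ^+ k * (x - y) = 0 -> x = y.
Proof.
 move=> E; apply/eqP; rewrite -subr_eq0; apply/eqP.
apply: (mulfI (expf_neq0 k h2)); rewrite mulr0 E ; by rewrite ?mulr0 ?addr0. Qed.

Lemma cert1 (K : fieldType) (h2 : (2%:R : K) != 0) (k : nat) (x y l1 r1 q1 : K) (H1 : l1 = r1) :
  2%:R ^+ k * (x - y) = q1 * (l1 - r1) -> x = y.
Proof.
have {}H1 : l1 - r1 = 0 by rewrite H1 subrr. move=> E; apply/eqP; rewrite -subr_eq0; apply/eqP.
apply: (mulfI (expf_neq0 k h2)); rewrite mulr0 E ?H1; by rewrite ?mulr0 ?addr0. Qed.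

Lemma cert2 (K : fieldType) (h2 : (2%:R : K) != 0) (k : nat) (x y l1 r1 l2 r2 q1 q2 : K) (H1 : l1 = r1) (H2 : l2 = r2) :
  2%:R ^+ k * (x - y) = q1 * (l1 - r1) + q2 * (l2 - r2) -> x = y.
Proof.
have {}H1 : l1 - r1 = 0 by rewrite H1 subrr. have {}H2 : l2 - r2 = 0 by rewrite H2 subrr. move=> E; apply/eqP; rewrite -subr_eq0; apply/eqP.
apply: (mulfI (expf_neq0 k h2)); rewrite mulr0 E ?H1 ?H2; by rewrite ?mulr0 ?addr0. Qed.

Lemma cert3 (K : fieldType) (h2 : (2%:R : K) != 0) (k : nat) (x y l1 r1 l2 r2 l3 r3 q1 q2 q3 : K) (H1 : l1 = r1) (H2 : l2 = r2) (H3 : l3 = r3) :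
  2%:R ^+ k * (x - y) = q1 * (l1 - r1) + q2 * (l2 - r2) + q3 * (l3 - r3) -> x = y.
Proof.
have {}H1 : l1 - r1 = 0 by rewrite H1 subrr. have {}H2 : l2 - r2 = 0 by rewrite H2 subrr. have {}H3 : l3 - r3 = 0 by rewrite H3 subrr. move=> E; apply/eqP; rewrite -subr_eq0; apply/eqP.
apply: (mulfI (expf_neq0 k h2)); rewrite mulr0 E ?H1 ?H2 ?H3; by rewrite ?mulr0 ?addr0. Qed.

Lemma cert4 (K : fieldType) (h2 : (2%:R : K) != 0) (k : nat) (x y l1 r1 l2 r2 l3 r3 l4 r4 q1 q2 q3 q4 : K) (H1 : l1 = r1) (H2 : l2 = r2) (H3 : l3 = r3) (H4 : l4 = r4) :
  2%:R ^+ k * (x - y) = q1 * (l1 - r1) + q2 * (l2 - r2) + q3 * (l3 - r3) + q4 * (l4 - r4) -> x = y.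
Proof.
have {}H1 : l1 - r1 = 0 by rewrite H1 subrr. have {}H2 : l2 - r2 = 0 by rewrite H2 subrr. have {}H3 : l3 - r3 = 0 by rewrite H3 subrr. have {}H4 : l4 - r4 = 0 by rewrite H4 subrr. move=> E; apply/eqP; rewrite -subr_eq0; apply/eqP.
apply: (mulfI (expf_neq0 k h2)); rewrite mulr0 E ?H1 ?H2 ?H3 ?H4; by rewrite ?mulr0 ?addr0. Qed.

Lemma cert5 (K : fieldType) (h2 : (2%:R : K) != 0) (k : nat) (x y l1 r1 l2 r2 l3 r3 l4 r4 l5 r5 q1 q2 q3 q4 q5 : K) (H1 : l1 = r1) (H2 : l2 = r2) (H3 : l3 = r3) (H4 : l4 = r4) (H5 : l5 = r5) :
  2%:R ^+ k * (x - y) = q1 * (l1 - r1) + q2 * (l2 - r2) + q3 * (l3 - r3) + q4 * (l4 - r4) + q5 * (l5 - r5) -> x = y.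
Proof.
have {}H1 : l1 - r1 = 0 by rewrite H1 subrr. have {}H2 : l2 - r2 = 0 by rewrite H2 subrr. have {}H3 : l3 - r3 = 0 by rewrite H3 subrr. have {}H4 : l4 - r4 = 0 by rewrite H4 subrr. have {}H5 : l5 - r5 = 0 by rewrite H5 subrr. move=> E; apply/eqP; rewrite -subr_eq0; apply/eqP.
apply: (mulfI (expf_neq0 k h2)); rewrite mulr0 E ?H1 ?H2 ?H3 ?H4 ?H5; by rewrite ?mulr0 ?addr0. Qed.

Lemma cert6 (K : fieldType) (h2 : (2%:R : K) != 0) (k : nat) (x y l1 r1 l2 r2 l3 r3 l4 r4 l5 r5 l6 r6 q1 q2 q3 q4 q5 q6 : K) (H1 : l1 = r1) (H2 : l2 = r2) (H3 : l3 = r3) (H4 : l4 = r4) (H5 : l5 = r5) (H6 : l6 = r6) :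
  2%:R ^+ k * (x - y) = q1 * (l1 - r1) + q2 * (l2 - r2) + q3 * (l3 - r3) + q4 * (l4 - r4) + q5 * (l5 - r5) + q6 * (l6 - r6) -> x = y.
Proof.
have {}H1 : l1 - r1 = 0 by rewrite H1 subrr. have {}H2 : l2 - r2 = 0 by rewrite H2 subrr. have {}H3 : l3 - r3 = 0 by rewrite H3 subrr. have {}H4 : l4 - r4 = 0 by rewrite H4 subrr. have {}H5 : l5 - r5 = 0 by rewrite H5 subrr. have {}H6 : l6 - r6 = 0 by rewrite H6 subrr. move=> E; apply/eqP; rewrite -subr_eq0; apply/eqP.
apply: (mulfI (expf_neq0 k h2)); rewrite mulr0 E ?H1 ?H2 ?H3 ?H4 ?H5 ?H6; by rewrite ?mulr0 ?addr0. Qed.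

Lemma cert7 (K : fieldType) (h2 : (2%:R : K) != 0) (k : nat) (x y l1 r1 l2 r2 l3 r3 l4 r4 l5 r5 l6 r6 l7 r7 q1 q2 q3 q4 q5 q6 q7 : K) (H1 : l1 = r1) (H2 : l2 = r2) (H3 : l3 = r3) (H4 : l4 = r4) (H5 : l5 = r5) (H6 : l6 = r6) (H7 : l7 = r7) :
  2%:R ^+ k * (x - y) = q1 * (l1 - r1) + q2 * (l2 - r2) + q3 * (l3 - r3) + q4 * (l4 - r4) + q5 * (l5 - r5) + q6 * (l6 - r6) + q7 * (l7 - r7) -> x = y.
Proof.
have {}H1 : l1 - r1 = 0 by rewrite H1 subrr. have {}H2 : l2 - r2 = 0 by rewrite H2 subrr. have {}H3 : l3 - r3 = 0 by rewrite H3 subrr. have {}H4 : l4 - r4 = 0 by rewrite H4 subrr. have {}H5 : l5 - r5 = 0 by rewrite H5 subrr. have {}H6 : l6 - r6 = 0 by rewrite H6 subrr. have {}H7 : l7 - r7 = 0 by rewrite H7 subrr. move=> E; apply/eqP; rewrite -subr_eq0; apply/eqP.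
apply: (mulfI (expf_neq0 k h2)); rewrite mulr0 E ?H1 ?H2 ?H3 ?H4 ?H5 ?H6 ?H7; by rewrite ?mulr0 ?addr0. Qed.
Lemma certg1 (K : fieldType) (m x y l1 r1 q1 : K) (hm : m != 0) (H1 : l1 = r1) :
  m * (x - y) = q1 * (l1 - r1) -> x = y.
Proof.
have {}H1 : l1 - r1 = 0 by rewrite H1 subrr. move=> E; apply/eqP; rewrite -subr_eq0; apply/eqP.
apply: (mulfI hm); rewrite mulr0 E ?H1; by rewrite ?mulr0 ?addr0. Qed.

Lemma certg2 (K : fieldType) (m x y l1 r1 l2 r2 q1 q2 : K) (hm : m != 0) (H1 : l1 = r1) (H2 : l2 = r2) :
  m * (x - y) = q1 * (l1 - r1) + q2 * (l2 - r2) -> x = y.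
Proof.
have {}H1 : l1 - r1 = 0 by rewrite H1 subrr. have {}H2 : l2 - r2 = 0 by rewrite H2 subrr. move=> E; apply/eqP; rewrite -subr_eq0; apply/eqP.
apply: (mulfI hm); rewrite mulr0 E ?H1 ?H2; by rewrite ?mulr0 ?addr0. Qed.

Lemma certg3 (K : fieldType) (m x y l1 r1 l2 r2 l3 r3 q1 q2 q3 : K) (hm : m != 0) (H1 : l1 = r1) (H2 : l2 = r2) (H3 : l3 = r3) :
  m * (x - y) = q1 * (l1 - r1) + q2 * (l2 - r2) + q3 * (l3 - r3) -> x = y.
Proof.
have {}H1 : l1 - r1 = 0 by rewrite H1 subrr. have {}H2 : l2 - r2 = 0 by rewrite H2 subrr. have {}H3 : l3 - r3 = 0 by rewrite H3 subrr. move=> E; apply/eqP; rewrite -subr_eq0; apply/eqP.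
apply: (mulfI hm); rewrite mulr0 E ?H1 ?H2 ?H3; by rewrite ?mulr0 ?addr0. Qed.
Section Coef.
Variable K : fieldType.
Implicit Types (a b c d e : K).

Definition Ec e a b c d (k : nat) : K :=
  match k with
  | 0 => b^+5*d + e*b*d^+5
  | 1 => b^+5*c + 5%:R*a*b^+4*d + e*(5%:R*b*c*d^+4 + a*d^+5)
  | 2 => 10%:R*a^+2*b^+3*d + 5%:R*a*b^+4*c + e*(5%:R*a*c*d^+4 + 10%:R*b*c^+2*d^+3)
  | 3 => 10%:R*a^+3*b^+2*d + 10%:R*a^+2*b^+3*c + e*(10%:R*a*c^+2*d^+3 + 10%:R*b*c^+3*d^+2)
  | 4 => 10%:R*a^+3*b^+2*c + 5%:R*a^+4*b*d + e*(10%:R*a*c^+3*d^+2 + 5%:R*b*c^+4*d)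
  | 5 => 5%:R*a^+4*b*c + a^+5*d + e*(5%:R*a*c^+4*d + b*c^+5)
  | 6 => a^+5*c + e*a*c^+5
  | _ => 0
  end.

Definition Rc e D (k : nat) : K := if k == 5%N then D else if k == 1%N then e * D else 0.

Lemma sum_expand e (M : 'M[K]_2) :
  \sum_(i < 7) ('X^5 + e%:P * 'X)`_i *: ((M 0 0 *: 'X + (M 0 1)%:P) ^+ i * (M 1 0 *: 'X + (M 1 1)%:P) ^+ (6 - i))
  = \poly_(k < 7) Ec e (M 0 0) (M 0 1) (M 1 0) (M 1 1) k.
Proof.
rewrite poly_def !big_ord_recr big_ord0 /=.
rewrite !coefD !coefXn !coefCM !coefX /=.
rewrite !mulr0 !mulr1 !add0r !addr0 !scale0r !add0r !addr0.
rewrite -!mul_polyC /=.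
set a := M 0 0; set b := M 0 1; set c := M 1 0; set d := M 1 1.
rewrite big_ord0 /=. ring.
Qed.
End Coef.
Section Aut.
Variable K : fieldType.
Definition eqs e (a b c d : K) := let D := a*d-b*c in
  [/\ Ec e a b c d 0 = 0, Ec e a b c d 1 = e*D^+2, Ec e a b c d 2 = 0, Ec e a b c d 3 = 0
    & Ec e a b c d 4 = 0] /\ (Ec e a b c d 5 = D^+2 /\ Ec e a b c d 6 = 0).

Lemma rhs_expand e (D : K) : D *: ('X^5 + e%:P * 'X) = \poly_(k < 7) Rc e D k.
Proof.
rewrite poly_def !big_ord_recr big_ord0 /= /Rc /= !scale0r !add0r !addr0 -!mul_polyC. ring.
Qed.

Lemma autP e (a b c d : K) : is_aut_mx ('X^5 + e%:P * 'X) (mx2 a b c d) <->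
  (a*d-b*c != 0) /\ eqs e a b c d.
Proof.
rewrite /is_aut_mx det_mx2.
have := sum_expand e (mx2 a b c d); rewrite !mxE /= => ->.
rewrite rhs_expand; split.
- case/andP=> -> /eqP E; split=> //.
  have C k : Ec e a b c d k = Rc e ((a * d - b * c) ^+ 2) k.
    by have := congr1 (fun p : {poly K} => p`_k) E; rewrite !coef_poly; case: k => [|[|[|[|[|[|[|k]]]]]]] //.
  by rewrite /eqs !C /Rc /=; rewrite ?mulr1.
- case=> -> [[E0 E1 E2 E3 E4] [E5 E6]] /=; apply/eqP/polyP=> k; rewrite !coef_poly.
  case: ltnP => // _.
  by case: k => [|[|[|[|[|[|[|]]]]]]] //=; rewrite /Rc /=.
Qed.
End Aut.


Definition D240 := (bool * bool * 'I_5 * 'I_5 * 'I_5)%type.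
Definition validn (kd : bool) (b c d : nat) : bool :=
  if kd then ((d + 4 * b * c) %% 5 != 0)%N else (b == 0)%N && (c != 0)%N.
Definition valid (x : D240) : bool :=
  let: (sg, kd, b, c, d) := x in validn kd b c d.
Lemma sum_pair (A B : finType) (G : A * B -> nat) : (\sum_(p : A * B) G p = \sum_(a : A) \sum_(b : B) G (a, b))%N.
Proof. by rewrite pair_bigA; apply: eq_bigr => -[a b]. Qed.
Lemma card_valid : #|[set x : D240 | valid x]| = 240%N.
Proof.
rewrite cardsE -sum1_card big_mkcond /=.
rewrite !sum_pair /=.
transitivity (\sum_(a : bool) \sum_(b : bool) \sum_(x < 5) \sum_(y < 5) \sum_(w < 5) (validn b x y w : nat))%N.
  by do 5! (apply: eq_bigr => ? _); rewrite unfold_in /=; case: validn.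
have E (kd : bool) : (\sum_(x < 5) \sum_(y < 5) \sum_(w < 5) (validn kd x y w : nat) =
    \sum_(0 <= x < 5) \sum_(0 <= y < 5) \sum_(0 <= w < 5) (validn kd x y w : nat))%N.
  rewrite big_mkord; apply: eq_bigr => x _; rewrite big_mkord; apply: eq_bigr => y _; by rewrite big_mkord.
rewrite !big_bool !E. rewrite unlock. by vm_compute.
Qed.
Definition xsg (x : D240) : bool := x.1.1.1.1.
Definition xkd (x : D240) : bool := x.1.1.1.2.
Definition xb (x : D240) : nat := x.1.1.2.
Definition xc (x : D240) : nat := x.1.2.
Definition xd (x : D240) : nat := x.2.
Definition detn (kd : bool) (b c d : nat) : nat :=
  if kd then ((d + 4 * b * c) %% 5)%N else ((4 * c) %% 5)%N.

Section ClassI.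
Variables (K : fieldType) (z r : K).
Hypotheses (hz : z^+4 = -1) (hr : r^+2 = 2%:R) (h2 : (2%:R : K) != 0).
#[local] Set Default Proof Using "All".

Lemma z8 : z^+8 = 1.
Proof. apply: (@cert1 _ h2 0 _ _ _ _ (- 1%:R + z^+4) hz); ring. Qed.

Lemma zm8 (m : nat) : (z^+m)^+8 = 1.
Proof. by rewrite -exprM mulnC exprM z8 expr1n. Qed.

Lemma zodd4 (j : nat) : (z^+(2*j+1))^+4 = -1.
Proof. by rewrite -exprM mulnDl mulnC mulnA exprD exprM z8 expr1n mul1r. Qed.

Lemma r_neq0 : r != 0.
Proof. by apply: contra h2 => /eqP r0; rewrite -hr r0 expr0n. Qed.

Lemma h4 : (4%:R : K) != 0.
Proof. by rewrite (natrM _ 2 2) mulf_neq0. Qed.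

Lemma roots4 (s : K) : s^+4 = -1 -> exists j : 'I_4, s = z^+(2*j+1).
Proof.
move=> hs.
have : (s - z) * (s - z^+3) * (s - z^+5) * (s - z^+7) = 0.
  apply: (@cert2 _ h2 0 _ _ _ _ _ _ (1%:R) (- 1%:R - s*z^+9 - s*z^+11 + s^+2*z^+4 + s^+2*z^+6 + s^+2*z^+8 - s^+3*z - s^+3*z^+3 + z^+4 - z^+8 + z^+12) hs hz); ring.
move/eqP; rewrite !mulf_eq0 !subr_eq0 -!orbA => /or4P [] /eqP ->.
- by exists (@Ordinal 4 0 isT).
- by exists (@Ordinal 4 1 isT).
- by exists (@Ordinal 4 2 isT).
- by exists (@Ordinal 4 3 isT).
Qed.

Lemma roots8 (w : K) : w^+8 = 1 -> exists m : 'I_8, w = z^+m.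
Proof.
move=> hw.
have : (w^+4 + 1) * (w - 1) * (w + 1) * (w - z^+2) * (w + z^+2) = 0.
  apply: (@cert2 _ h2 0 _ _ _ _ _ _ (1%:R) (1%:R - w^+2 + w^+4 - w^+6) hw hz); ring.
move/eqP; rewrite !mulf_eq0 => /orP [/orP [/orP [/orP [|]|]|]|]; rewrite ?subr_eq0 ?addr_eq0 => /eqP.
- move=> /roots4 [j ->].
  have lt : (2 * j + 1 < 8)%N by have := ltn_ord j; lia.
  by exists (Ordinal lt).
- by move=> ->; exists (@Ordinal 8 0 isT); rewrite expr0.
- by move=> ->; exists (@Ordinal 8 4 isT); rewrite /= hz.
- by move=> ->; exists (@Ordinal 8 2 isT).
- move=> ->; exists (@Ordinal 8 6 isT) => /=; apply/esym.
  apply: (@cert1 _ h2 0 _ _ _ _ (z^+2) hz); ring.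
Qed.

Lemma autf_eq (a b c d : K) : is_aut_mx ('X^5 + 'X) (mx2 a b c d) <-> (a*d-b*c != 0) /\ eqs 1 a b c d.
Proof. by rewrite -(autP 1) polyC1 mul1r. Qed.

Definition D48 := ('I_2 * 'I_8 + 'I_8 * 'I_4)%type.
Definition eA (x : D48) : 'M[K]_2 :=
  match x with
  | inl (k, m) => if k == ord0 then mx2 0 ((z^+m)^+3) (z^+m) 0 else mx2 (z^+m) 0 0 ((z^+m)^+3)
  | inr (m, j) => mx2 (z^+m / r) (- 2%:R * (z^+m / r)^+3 * (z^+(2*j+1))^+3)
        (z^+m / r * z^+(2*j+1)) (- 2%:R * (z^+m / r)^+3)
  end.

Lemma revA (w : K) : w^+8 = 1 -> is_aut_mx ('X^5 + 'X) (mx2 0 (w^+3) w 0).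
Proof.
move=> hw; have wnz : w != 0 by apply/eqP => w0; move: hw; rewrite w0 expr0n /= => /eqP; rewrite eq_sym oner_eq0.
apply/autf_eq; split.
  by rewrite mul0r sub0r oppr_eq0 mulf_neq0 // expf_neq0.
rewrite /eqs /Ec; split; [split|split].
- apply: (@cert1 _ h2 0 _ _ _ _ 0 hw); ring.
- apply: (@cert1 _ h2 0 _ _ _ _ (w^+8) hw); ring.
- apply: (@cert1 _ h2 0 _ _ _ _ 0 hw); ring.
- apply: (@cert1 _ h2 0 _ _ _ _ 0 hw); ring.
- apply: (@cert1 _ h2 0 _ _ _ _ 0 hw); ring.
- apply: (@cert1 _ h2 0 _ _ _ _ 0 hw); ring.
- apply: (@cert1 _ h2 0 _ _ _ _ 0 hw); ring.
Qed.

Lemma revB (w : K) : w^+8 = 1 -> is_aut_mx ('X^5 + 'X) (mx2 w 0 0 (w^+3)).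
Proof.
move=> hw; have wnz : w != 0 by apply/eqP => w0; move: hw; rewrite w0 expr0n /= => /eqP; rewrite eq_sym oner_eq0.
apply/autf_eq; split.
  by rewrite mul0r subr0 mulf_neq0 // expf_neq0.
rewrite /eqs /Ec; split; [split|split].
- apply: (@cert1 _ h2 0 _ _ _ _ 0 hw); ring.
- apply: (@cert1 _ h2 0 _ _ _ _ (w^+8) hw); ring.
- apply: (@cert1 _ h2 0 _ _ _ _ 0 hw); ring.
- apply: (@cert1 _ h2 0 _ _ _ _ 0 hw); ring.
- apply: (@cert1 _ h2 0 _ _ _ _ 0 hw); ring.
- apply: (@cert1 _ h2 0 _ _ _ _ 0 hw); ring.
- apply: (@cert1 _ h2 0 _ _ _ _ 0 hw); ring.
Qed.

Lemma revC (a s : K) : 16%:R * a^+8 = 1 -> s^+4 = -1 ->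
  is_aut_mx ('X^5 + 'X) (mx2 a (- 2%:R * a^+3 * s^+3) (a * s) (- 2%:R * a^+3)).
Proof.
move=> ha hs; have anz : a != 0 by apply/eqP => a0; move: ha; rewrite a0 expr0n mulr0 => /eqP; rewrite eq_sym oner_eq0.
apply/autf_eq; split.
  have -> : a * (- 2%:R * a^+3) - (- 2%:R * a^+3 * s^+3) * (a * s) = - (4%:R * a^+4).
    apply: (@cert1 _ h2 0 _ _ _ _ (2%:R*a^+4) hs); ring.
  by rewrite oppr_eq0 mulf_neq0 ?h4 // expf_neq0.
rewrite /eqs /Ec; split; [split|split].
- apply: (@cert2 _ h2 2 _ _ _ _ _ _ (a^+2*s^+3 + a^+2*s^+15 + 16%:R*a^+10*s^+3 + 16%:R*a^+10*s^+15) (a^+2*s^+3 - a^+2*s^+7 + a^+2*s^+11) ha hs); ring.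
- apply: (@cert2 _ h2 3 _ _ _ _ _ _ (- 3%:R - 16%:R*a^+8 - 80%:R*a^+8*s^+4 - 80%:R*a^+8*s^+12 - 16%:R*a^+8*s^+16 - s^+4 - 2%:R*s^+8 - 5%:R*s^+12 - s^+16) (- 3%:R + 2%:R*s^+4 - 4%:R*s^+8 - s^+12) ha hs); ring.
- apply: (@cert2 _ h2 0 _ _ _ _ _ _ (5%:R*a^+6*s + 10%:R*a^+6*s^+5 + 10%:R*a^+6*s^+9 + 5%:R*a^+6*s^+13) (5%:R*a^+6*s + 5%:R*a^+6*s^+5 + 5%:R*a^+6*s^+9) ha hs); ring.
- apply: (@cert2 _ h2 0 _ _ _ _ _ _ (- 5%:R*a^+4*s^+2 - 10%:R*a^+4*s^+6 - 5%:R*a^+4*s^+10) (- 5%:R*a^+4*s^+2 - 5%:R*a^+4*s^+6) ha hs); ring.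
- apply: (@cert2 _ h2 2 _ _ _ _ _ _ (15%:R*a^+2*s^+3 + 15%:R*a^+2*s^+7) (15%:R*a^+2*s^+3) ha hs); ring.
- apply: (@cert2 _ h2 3 _ _ _ _ _ _ (- 3%:R - 6%:R*s^+4 - 3%:R*s^+8) (- 3%:R - 3%:R*s^+4) ha hs); ring.
- apply: (@cert2 _ h2 0 _ _ _ _ _ _ 0 (a^+6*s) ha hs); ring.
Qed.

Lemma eA_aut x : is_aut_mx ('X^5 + 'X) (eA x).
Proof.
case: x => [[k m]|[m j]] /=.
- by case: ifP => _; [apply: revA | apply: revB]; rewrite zm8.
- apply: revC; last exact: zodd4.
  rewrite expr_div_n zm8 -[8%N]/(2*4)%N exprM hr -(natrX _ 2 4) mul1r mulfV //.
  by rewrite (_ : ((2*4).+4.+4 = 2 ^ 4)%N) // natrX expf_neq0.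
Qed.


Lemma mulx0 (x y : K) : x * y = 0 -> x != 0 -> y = 0.
Proof. by move=> /eqP; rewrite mulf_eq0 => /orP [/eqP->|/eqP//]; rewrite eqxx. Qed.
Ltac nz := repeat (match goal with
  | |- is_true (_ * _ != 0) => apply: mulf_neq0
  | |- is_true (_ ^+ _ != 0) => apply: expf_neq0 end); try assumption.
Lemma classI_fwd (h5 : (5%:R : K) != 0) (a b c d : K) :
  is_aut_mx ('X^5 + 'X) (mx2 a b c d) -> exists x, mx2 a b c d = eA x.
Proof.
have h10 : (10%:R : K) != 0 by rewrite (natrM _ 2 5) mulf_neq0.
have h4' := h4.
move=> /autf_eq [nzD [[E0 E1 E2 E3 E4] [E5 E6]]].
move: E0 E1 E2 E3 E4 E5 E6; rewrite /Ec => E0 E1 E2 E3 E4 E5 E6.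
have [a0|anz] := eqVneq a 0.
  subst a.
  move: nzD; rewrite mul0r sub0r oppr_eq0 mulf_eq0 negb_or => /andP [bnz cnz].
  have hb : b = c^+3.
    have key : b * c^+2 * (c^+3 - b) = 0 by apply: (@cert1 _ h2 0 _ _ _ _ (1%:R) E5); ring.
    have := mulx0 key ltac:(nz).
    by move/eqP; rewrite subr_eq0 => /eqP ->.
  have hd : d = 0.
    have key : 5%:R * b * c^+4 * d = 0 by apply: (@cert1 _ h2 0 _ _ _ _ (1%:R) E4); ring.
    have := mulx0 key ltac:(nz).
    by [].
  subst d.
  have hb3 : b^+3 = c.
    have key : b^+2 * c * (b^+3 - c) = 0 by apply: (@cert1 _ h2 0 _ _ _ _ (1%:R) E1); ring.
    have := mulx0 key ltac:(nz).
    by move/eqP; rewrite subr_eq0 => /eqP ->.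
  have hc8 : c^+8 = 1.
    have : c * (c^+8 - 1) = 0.
      by rewrite hb -exprM in hb3; rewrite mulrBr mulr1 -exprS hb3 subrr.
    by move/eqP; rewrite mulf_eq0 (negbTE cnz) /= subr_eq0 => /eqP.
  have [m hm] := roots8 hc8.
  by exists (inl (ord0, m)); rewrite /= -hm hb.
have [c0|cnz] := eqVneq c 0.
  subst c.
  move: nzD; rewrite mulr0 subr0 mulf_eq0 negb_or => /andP [_ dnz].
  have hd : d = a^+3.
    have key : a^+2 * d * (a^+3 - d) = 0 by apply: (@cert1 _ h2 0 _ _ _ _ (1%:R) E5); ring.
    have := mulx0 key ltac:(nz).
    by move/eqP; rewrite subr_eq0 => /eqP ->.
  have hb : b = 0.
    have key : 5%:R * a^+4 * d * b = 0 by apply: (@cert1 _ h2 0 _ _ _ _ (1%:R) E4); ring.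
    have := mulx0 key ltac:(nz).
    by [].
  subst b.
  have hd3 : d^+3 = a.
    have key : a * d^+2 * (d^+3 - a) = 0 by apply: (@cert1 _ h2 0 _ _ _ _ (1%:R) E1); ring.
    have := mulx0 key ltac:(nz).
    by move/eqP; rewrite subr_eq0 => /eqP ->.
  have ha8 : a^+8 = 1.
    have : a * (a^+8 - 1) = 0.
      by rewrite hd -exprM in hd3; rewrite mulrBr mulr1 -exprS hd3 subrr.
    by move/eqP; rewrite mulf_eq0 (negbTE anz) /= subr_eq0 => /eqP.
  have [m hm] := roots8 ha8.
  by exists (inl (@Ordinal 2 1 isT, m)); rewrite /= -hm hd.
have [s hc] : exists s, c = a * s by exists (c / a); rewrite mulrC divfK.
subst c.
have snz : s != 0 by apply: contraNneq cnz => ->; rewrite mulr0.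
have hs : s^+4 = -1.
  have key : a^+6 * s * (s^+4 + 1) = 0 by apply: (@cert1 _ h2 0 _ _ _ _ (1%:R) E6); ring.
  have := mulx0 key ltac:(nz).
  by move/eqP; rewrite addr_eq0 => /eqP ->.
have [b0|bnz] := eqVneq b 0.
  subst b; move: nzD; rewrite mul0r subr0 mulf_eq0 negb_or => /andP [_ dnz].
  have key : 5%:R * a^+2 * s * d^+4 = 0 by apply: (@cert1 _ h2 0 _ _ _ _ (1%:R) E2); ring.
  have := mulx0 key ltac:(nz).
  move=> Y0; have : d^+4 != 0 by nz.
  by rewrite Y0 eqxx.
have [d0|dnz] := eqVneq d 0.
  subst d.
  have key : 5%:R * a^+2 * b^+4 * s = 0 by apply: (@cert1 _ h2 0 _ _ _ _ (1%:R) E2); ring.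
  have := mulx0 key ltac:(nz).
  by move=> Y0; move: snz; rewrite Y0 eqxx.
have [t hd] : exists t, d = b * t by exists (d / b); rewrite mulrC divfK.
subst d.
have tnz : t != 0 by apply: contraNneq dnz => ->; rewrite mulr0.
have ht : t^+4 = -1.
  have key : b^+6 * t * (t^+4 + 1) = 0 by apply: (@cert1 _ h2 0 _ _ _ _ (1%:R) E0); ring.
  have := mulx0 key ltac:(nz).
  by move/eqP; rewrite addr_eq0 => /eqP ->.
have hst : 1 + s^+2 * t^+2 = 0.
  have key : 10%:R * a^+4 * b^+2 * s * (1 + s^+2 * t^+2) = 0 by apply: (@cert2 _ h2 0 _ _ _ _ _ _ (1%:R) (- 5%:R*a^+4*b^+2*t) E4 hs); ring.
  have := mulx0 key ltac:(nz).
  by [].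
have htsn : t - s != 0.
  by move: nzD; rewrite (_ : a * (b * t) - b * (a * s) = a * b * (t - s)); [rewrite !mulf_eq0 !negb_or => /andP [_ ->] | ring].
have hts : t = - s.
  have key : s^+2 * (t - s) * (t + s) = 0 by apply: (@cert2 _ h2 0 _ _ _ _ _ _ (1%:R) (- 1%:R) hst hs); ring.
  have := mulx0 key ltac:(nz).
  by move/eqP; rewrite addr_eq0 => /eqP ->.
subst t.
have hbs : b * s = 2%:R * a^+3.
  have key : 4%:R * a^+2 * b * s * (2%:R * a^+3 - b * s) = 0 by apply: (@cert2 _ h2 0 _ _ _ _ _ _ (1%:R) (4%:R*a^+5*b*s) E5 hs); ring.
  have := mulx0 key ltac:(nz).
  by move/eqP; rewrite subr_eq0 => /eqP ->.
have has : a * s = - 2%:R * b^+3.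
  have key : 4%:R * a * b^+2 * s * (2%:R * b^+3 + a * s) = 0 by apply: (@cert2 _ h2 0 _ _ _ _ _ _ (- 1%:R) (4%:R*a*b^+5*s) E1 hs); ring.
  have := mulx0 key ltac:(nz).
  by move/eqP; rewrite addr_eq0 => /eqP h; rewrite mulNr h opprK.
have h16 : 16%:R * a^+8 = 1.
  have key : a * (16%:R * a^+8 - 1) = 0 by apply: (@cert3 _ h2 0 _ _ _ _ _ _ _ _ (- 4%:R*a^+3*b*s - 8%:R*a^+6 - 2%:R*b^+2*s^+2) (s^+3) (- a) hbs has hs); ring.
  have := mulx0 key ltac:(nz).
  by move/eqP; rewrite subr_eq0 => /eqP ->.
have har : (a * r)^+8 = 1 by apply: (@cert2 _ h2 4 _ _ _ _ _ _ (r^+8) (8%:R + 4%:R*r^+2 + 2%:R*r^+4 + r^+6) h16 hr); ring.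
have [m hm] := roots8 har.
have [j hj] := roots4 hs.
exists (inr (m, j)) => /=.
have ha : a = z^+m / r by rewrite -hm mulfK // r_neq0.
rewrite -ha -hj.
have -> : b * - s = - 2%:R * a^+3 by rewrite mulrN hbs mulNr.
have -> : b = - 2%:R * a^+3 * s^+3 by apply: (@cert2 _ h2 0 _ _ _ _ _ _ (- s^+3) (b) hbs hs); ring.
by [].
Qed.

Lemma autg_eq (a b c d : K) : is_aut_mx ('X^5 - 'X) (mx2 a b c d) <-> (a*d-b*c != 0) /\ eqs (-1) a b c d.
Proof. by rewrite -(autP (-1)) polyCN polyC1 mulN1r. Qed.

Lemma znz : z != 0.
Proof. apply/eqP => z0; move: hz; rewrite z0 expr0n /= => /eqP; rewrite eq_sym oppr_eq0 oner_eq0. by []. Qed.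

Lemma xfer (a b c d : K) : is_aut_mx ('X^5 + 'X) (mx2 a (b * z) c d) <-> is_aut_mx ('X^5 - 'X) (mx2 a b (c * z) d).
Proof.
have znz := znz.
rewrite autf_eq autg_eq.
have eD : a * d - b * z * c = a * d - b * (c * z) by ring.
split.
  move=> [nzD [[E0 E1 E2 E3 E4] [E5 E6]]]; split; first by rewrite -eD.
  move: E0 E1 E2 E3 E4 E5 E6; rewrite /Ec => E0 E1 E2 E3 E4 E5 E6.
  rewrite /eqs /Ec; split; [split|split].
  - apply: (@certg2 _ z _ _ _ _ _ _ (- 1%:R) (b^+5*d*z) znz E0 hz); ring.
  - apply: (@certg2 _ z _ _ _ _ _ _ (- z) (5%:R*a*b^+4*d*z + b^+5*c*z^+2) znz E1 hz); ring.
  - apply: (@certg2 _ z _ _ _ _ _ _ (- z^+2) (5%:R*a*b^+4*c*z^+2 + 10%:R*a^+2*b^+3*d*z) znz E2 hz); ring.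
  - apply: (@certg2 _ z _ _ _ _ _ _ (- z^+3) (10%:R*a^+2*b^+3*c*z^+2 + 10%:R*a^+3*b^+2*d*z) znz E3 hz); ring.
  - apply: (@certg2 _ z _ _ _ _ _ _ (- z^+4) (10%:R*a^+3*b^+2*c*z^+2 + 5%:R*a^+4*b*d*z) znz E4 hz); ring.
  - apply: (@certg2 _ z _ _ _ _ _ _ (- z^+5) (2%:R*a*b*c*d*z^+2 - a^+2*d^+2*z + 5%:R*a^+4*b*c*z^+2 + a^+5*d*z - b^+2*c^+2*z^+3) znz E5 hz); ring.
  - apply: (@certg2 _ z _ _ _ _ _ _ (- z^+6) (a^+5*c*z^+2) znz E6 hz); ring.
move=> [nzD [[E0 E1 E2 E3 E4] [E5 E6]]]; split; first by rewrite eD.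
move: E0 E1 E2 E3 E4 E5 E6; rewrite /Ec => E0 E1 E2 E3 E4 E5 E6.
rewrite /eqs /Ec; split; [split|split].
- apply: (@cert2 _ h2 0 _ _ _ _ _ _ (- z^+9) (b*d^+5*z - b*d^+5*z^+5 + b^+5*d*z^+5) E0 hz); ring.
- apply: (@cert2 _ h2 0 _ _ _ _ _ _ (- z^+8) (2%:R*a*b*c*d*z - 2%:R*a*b*c*d*z^+5 + 5%:R*a*b^+4*d*z^+4 + a*d^+5 - a*d^+5*z^+4 - a^+2*d^+2 + a^+2*d^+2*z^+4 + 5%:R*b*c*d^+4*z - 5%:R*b*c*d^+4*z^+5 - b^+2*c^+2*z^+2 + b^+2*c^+2*z^+6 + b^+5*c*z^+5) E1 hz); ring.
- apply: (@cert2 _ h2 0 _ _ _ _ _ _ (- z^+7) (5%:R*a*b^+4*c*z^+4 + 5%:R*a*c*d^+4 - 5%:R*a*c*d^+4*z^+4 + 10%:R*a^+2*b^+3*d*z^+3 + 10%:R*b*c^+2*d^+3*z - 10%:R*b*c^+2*d^+3*z^+5) E2 hz); ring.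
- apply: (@cert2 _ h2 0 _ _ _ _ _ _ (- z^+6) (10%:R*a*c^+2*d^+3 - 10%:R*a*c^+2*d^+3*z^+4 + 10%:R*a^+2*b^+3*c*z^+3 + 10%:R*a^+3*b^+2*d*z^+2 + 10%:R*b*c^+3*d^+2*z - 10%:R*b*c^+3*d^+2*z^+5) E3 hz); ring.
- apply: (@cert2 _ h2 0 _ _ _ _ _ _ (- z^+5) (10%:R*a*c^+3*d^+2 - 10%:R*a*c^+3*d^+2*z^+4 + 10%:R*a^+3*b^+2*c*z^+2 + 5%:R*a^+4*b*d*z + 5%:R*b*c^+4*d*z - 5%:R*b*c^+4*d*z^+5) E4 hz); ring.
- apply: (@cert2 _ h2 0 _ _ _ _ _ _ (- z^+4) (2%:R*a*b*c*d*z + 5%:R*a*c^+4*d - 5%:R*a*c^+4*d*z^+4 - a^+2*d^+2 + 5%:R*a^+4*b*c*z + a^+5*d + b*c^+5*z - b*c^+5*z^+5 - b^+2*c^+2*z^+2) E5 hz); ring.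
- apply: (@cert2 _ h2 0 _ _ _ _ _ _ (- z^+3) (a*c^+5 - a*c^+5*z^+4 + a^+5*c) E6 hz); ring.
Qed.

Lemma one_neq_m1 : (1 : K) != -1.
Proof.
apply/eqP => e; move/eqP: h2; apply; rewrite mulr2n.
by rewrite {1}e addNr.
Qed.

Lemma zk1 k : (0 < k < 8)%N -> z^+k != 1.
Proof.
have om := one_neq_m1.
case: k => [|[|[|[|[|[|[|[|k]]]]]]]] // _; apply/eqP => e.
- have H : (z^+4)^+1 = 1 by rewrite -exprM (_ : (4*1 = 1*4)%N) // exprM e expr1n.
  rewrite hz (_ : (-1 : K)^+1 = -1) in H; last by ring.
  by move/eqP: om; rewrite H.
- have H : (z^+4)^+1 = 1 by rewrite -exprM (_ : (4*1 = 2*2)%N) // exprM e expr1n.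
  rewrite hz (_ : (-1 : K)^+1 = -1) in H; last by ring.
  by move/eqP: om; rewrite H.
- have H : (z^+4)^+3 = 1 by rewrite -exprM (_ : (4*3 = 3*4)%N) // exprM e expr1n.
  rewrite hz (_ : (-1 : K)^+3 = -1) in H; last by ring.
  by move/eqP: om; rewrite H.
- have H : (z^+4)^+1 = 1 by rewrite expr1 e.
  rewrite hz (_ : (-1 : K)^+1 = -1) in H; last by ring.
  by move/eqP: om; rewrite H.
- have H : (z^+4)^+5 = 1 by rewrite -exprM (_ : (4*5 = 5*4)%N) // exprM e expr1n.
  rewrite hz (_ : (-1 : K)^+5 = -1) in H; last by ring.
  by move/eqP: om; rewrite H.
- have H : (z^+4)^+3 = 1 by rewrite -exprM (_ : (4*3 = 6*2)%N) // exprM e expr1n.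
  rewrite hz (_ : (-1 : K)^+3 = -1) in H; last by ring.
  by move/eqP: om; rewrite H.
- have H : (z^+4)^+7 = 1 by rewrite -exprM (_ : (4*7 = 7*4)%N) // exprM e expr1n.
  rewrite hz (_ : (-1 : K)^+7 = -1) in H; last by ring.
  by move/eqP: om; rewrite H.
Qed.

Lemma zpow_inj (m n : nat) : (m < 8)%N -> (n < 8)%N -> z^+m = z^+n -> m = n.
Proof.
wlog le : m n / (m <= n)%N.
  move=> H hm hn e; case: (leqP m n) => h; first exact: H.
  by apply/esym/H => //; apply: ltnW.
move=> hm hn e.
have zmnz : z^+m != 0 by rewrite expf_neq0 // znz.
have e1 : z^+(n - m) = 1.
  by apply: (mulfI zmnz); rewrite -exprD subnKC // -e mulr1.
case: (ltnP m n) => h; last by apply/eqP; rewrite eqn_leq le h.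
have hk : (0 < n - m < 8)%N by apply/andP; split; lia.
by move/eqP: (zk1 hk); rewrite e1.
Qed.

Lemma zpnz (m : nat) : z^+m != 0.
Proof. by rewrite expf_neq0 // znz. Qed.

Lemma eA_inj : injective eA.
Proof.
have rnz := r_neq0.
have anz m : z^+m / r != 0 by rewrite mulf_neq0 ?invr_eq0 ?zpnz.
move=> [[k m]|[m j]] [[k' m']|[m' j']] /=.
- case: k => [[|[|//]] hk]; case: k' => [[|[|//]] hk'] /= /mx2_inj [e1 e2 e3 e4].
  + have em : m = m' :> nat by apply: zpow_inj.
    by congr (inl (_, _)); apply: val_inj.
  + by move/eqP: (zpnz m'); rewrite -e1.
  + by move/eqP: (zpnz m); rewrite e1.
  + have em : m = m' :> nat by apply: zpow_inj.
    by congr (inl (_, _)); apply: val_inj.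
- case: k => [[|[|//]] hk] /= /mx2_inj [e1 e2 e3 e4].
  + by move/eqP: (anz m'); rewrite -e1.
  + by move/eqP: (mulf_neq0 (anz m') (zpnz (2 * j' + 1))); rewrite -e3.
- case: k' => [[|[|//]] hk'] /= /mx2_inj [e1 e2 e3 e4].
  + by move/eqP: (anz m); rewrite e1.
  + by move/eqP: (mulf_neq0 (anz m) (zpnz (2 * j + 1))); rewrite e3.
- move=> /mx2_inj [e1 e2 e3 e4].
  have ezm : z^+m = z^+m' by apply: (mulIf (invr_neq0 rnz)).
  have em : m = m' :> nat by apply: zpow_inj.
  rewrite e1 in e3; have es := mulfI (anz m') e3.
  have hj := ltn_ord j; have hj' := ltn_ord j'.
  have ej : (2 * j + 1 = 2 * j' + 1)%N by apply: zpow_inj => //; lia.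
  have ej' : j = j' :> nat by lia.
  by congr (inr (_, _)); apply: val_inj.
Qed.

Definition sig5 (n : nat) : K :=
  match n with 1 => 1 | 2 => r | 3 => r * z^+2 | 4 => 2%:R | _ => 0 end.
Definition lamx (x : D240) : K := (if xsg x then 1 else -1) * sig5 (detn (xkd x) (xb x) (xc x) (xd x)).
Definition alx (x : D240) : K := if xkd x then 1 else 0.
Definition bex (x : D240) : K := if xkd x then (xb x)%:R else 1.
Definition gmat (x : D240) : 'M[K]_2 :=
  mx2 (lamx x * alx x) (lamx x * bex x) (lamx x * (xc x)%:R) (lamx x * (xd x)%:R).
Definition eB (x : D240) : 'M[K]_2 :=
  mx2 (lamx x * alx x) (lamx x * bex x * z) (- (lamx x * (xc x)%:R * z^+3)) (lamx x * (xd x)%:R).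

Lemma sign_sq (u v : K) : u^+2 = v^+2 -> exists sg : bool, u = (if sg then 1 else -1) * v.
Proof.
move=> e.
have : (u - v) * (u + v) = 0.
  have -> : (u - v) * (u + v) = u^+2 - v^+2 by ring.
  by rewrite e subrr.
move/eqP; rewrite mulf_eq0 subr_eq0 addr_eq0 => /orP [] /eqP ->.
- by exists true; rewrite mul1r.
- by exists false; rewrite mulN1r.
Qed.

Section C5.
Hypothesis h5 : (5%:R : K) = 0.

Lemma pchar5 : (5 \in [pchar K])%N.
Proof. by rewrite inE /= h5 eqxx. Qed.

Lemma nat_eq0 n : (n%:R == 0 :> K) = (5 %| n)%N.
Proof. by rewrite (dvdn_pcharf pchar5). Qed.

Lemma natmod5 n : ((n %% 5)%:R : K) = n%:R.
Proof. by rewrite {2}(divn_eq n 5) natrD natrM h5 mulr0 add0r. Qed.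

Lemma nat_inj5 m n : (m < 5)%N -> (n < 5)%N -> (m%:R : K) = n%:R -> m = n.
Proof.
wlog le : m n / (m <= n)%N.
  move=> H hm hn e; case: (leqP m n) => h; first exact: H.
  by apply/esym/H => //; apply: ltnW.
move=> hm hn e.
have : ((n - m)%:R == 0 :> K) by rewrite natrB // e subrr.
rewrite nat_eq0 => /dvdnP [k hk]; lia.
Qed.

Lemma natnz n : (0 < n < 5)%N -> (n%:R : K) != 0.
Proof. move=> h; rewrite nat_eq0; apply/negP => /dvdnP [k hk]; lia. Qed.

Lemma frob n : (n < 5)%N -> (n%:R : K)^+5 = n%:R.
Proof.
case: n => [|[|[|[|[|n]]]]] // _.
- by rewrite expr0n.
- by rewrite expr1n.
- apply: (@cert1 _ h2 0 _ _ _ _ (6%:R) h5); ring.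
- apply: (@cert1 _ h2 0 _ _ _ _ (48%:R) h5); ring.
- apply: (@cert1 _ h2 0 _ _ _ _ (204%:R) h5); ring.
Qed.

Lemma F5root (x : K) : x^+5 = x -> exists k : 'I_5, x = k%:R.
Proof.
move=> hx.
have : x * (x - 1) * (x - 2%:R) * (x - 3%:R) * (x - 4%:R) = 0.
  apply: (@cert2 _ h2 0 _ _ _ _ _ _ (1%:R) (5%:R*x - 10%:R*x^+2 + 7%:R*x^+3 - 2%:R*x^+4) hx h5); ring.
move/eqP; rewrite !mulf_eq0 => /orP[/orP[/orP[/orP[|]|]|]|]; rewrite ?subr_eq0 => /eqP ->.
- by exists (@Ordinal 5 0 isT).
- by exists (@Ordinal 5 1 isT).
- by exists (@Ordinal 5 2 isT).
- by exists (@Ordinal 5 3 isT).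
- by exists (@Ordinal 5 4 isT).
Qed.

Lemma sig5_sq n : (0 < n < 5)%N -> sig5 n ^+ 2 = n%:R.
Proof.
case: n => [|[|[|[|[|n]]]]] h; rewrite /sig5 /=;
 [by rewrite expr0n | by rewrite expr1n | by rewrite hr | (apply: (@cert3 _ h2 0 _ _ _ _ _ _ _ _ (z^+4) (2%:R) (- 1%:R) hr hz h5); ring) | (apply: (@cert0 _ h2 0 _ _   ); ring) | by []].
Qed.

Lemma sig5_nz n : (0 < n < 5)%N -> sig5 n != 0.
Proof.
move=> h; apply/eqP => e; move: (natnz h); rewrite -(sig5_sq h) e expr0n /=.
by rewrite eqxx.
Qed.

Lemma det_ok x : valid x ->
  alx x * (xd x)%:R - bex x * (xc x)%:R = (detn (xkd x) (xb x) (xc x) (xd x))%:R /\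
  (0 < detn (xkd x) (xb x) (xc x) (xd x) < 5)%N.
Proof.
case: x => [[[[sg kd] b] c] d]; rewrite /valid /validn /alx /bex /detn /xkd /xb /xc /xd /=.
have hb := ltn_ord b; have hc := ltn_ord c; have hd := ltn_ord d.
case: kd => hv.
- split; last by rewrite ltn_mod andbT lt0n.
  rewrite natmod5 natrD !natrM mul1r.
  move: (b : nat) (c : nat) (d : nat) => be ga de.
  move: (be%:R : K) (ga%:R : K) (de%:R : K) => {}be {}ga {}de.
  apply: (@cert1 _ h2 0 _ _ _ _ (- be*ga) h5); ring.
- move: hv => /andP [/eqP hb0 hc0].
  split; last by rewrite ltn_mod andbT lt0n; apply/negP => /dvdnP [k hk]; move: hc0; lia.
  rewrite natmod5 natrM mul0r sub0r mul1r.
  move: (c%:R : K) => ga.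
  apply: (@cert1 _ h2 0 _ _ _ _ (- ga) h5); ring.
Qed.

Lemma lam_sq x : valid x -> lamx x ^+ 2 = alx x * (xd x)%:R - bex x * (xc x)%:R.
Proof.
move=> hv; have [e hn] := det_ok hv.
rewrite /lamx exprMn sig5_sq // -e.
by case: xsg; rewrite ?expr1n ?sqrrN ?expr1n mul1r.
Qed.

Lemma lam_nz x : valid x -> lamx x != 0.
Proof.
move=> hv; have [e hn] := det_ok hv.
rewrite /lamx mulf_neq0 ?sig5_nz //.
by case: xsg; rewrite ?oppr_eq0 oner_eq0.
Qed.

Lemma revG x : valid x -> is_aut_mx ('X^5 - 'X) (gmat x).
Proof.
move=> hv; have hl := lam_sq hv; have [e hn] := det_ok hv; have lnz := lam_nz hv.
have h1 : alx x ^+ 5 = alx x by rewrite /alx; case: xkd; rewrite ?expr1n ?expr0n.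
have h2' : bex x ^+ 5 = bex x.
  by rewrite /bex; case: xkd; [apply: frob; exact: ltn_ord | rewrite expr1n].
have h3 : ((xc x)%:R : K) ^+ 5 = (xc x)%:R by apply: frob; exact: ltn_ord.
have h4 : ((xd x)%:R : K) ^+ 5 = (xd x)%:R by apply: frob; exact: ltn_ord.
rewrite /gmat; move: hl h1 h2' h3 h4 e lnz.
move: (lamx x) (alx x) (bex x) ((xc x)%:R : K) ((xd x)%:R : K) => lm al be ga de.
move=> hl h1 h2' h3 h4 e lnz.
apply/autg_eq; split.
  rewrite (_ : lm * al * (lm * de) - lm * be * (lm * ga) = lm^+2 * (al * de - be * ga)); last by ring.
  by rewrite mulf_neq0 ?expf_neq0 // e natnz.
rewrite /eqs /Ec; split; [split|split].
- apply: (@cert6 _ h2 0 _ _ _ _ _ _ _ _ _ _ _ _ _ _ 0 (de*lm^+6) 0 (- be*lm^+6) 0 0 h1 h2' h3 h4 hl h5); ring.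
- apply: (@cert6 _ h2 0 _ _ _ _ _ _ _ _ _ _ _ _ _ _ 0 (- 5%:R*al*de*ga*lm^+4 - 5%:R*al^+2*de^+2*ga*lm^+2 - 5%:R*al^+3*de^+3*ga + ga*lm^+6) 0 (- 5%:R*al*be*ga*lm^+4 + 5%:R*al*be^+2*ga^+2*lm^+2 - 5%:R*al*be^+3*ga^+3 - al*lm^+6) (- 10%:R*al*be*de*ga*lm^+2 + 15%:R*al*be^+2*de*ga^+2 + 5%:R*al*be^+4*de*lm^+4 - al*de*lm^+4 - 15%:R*al^+2*be*de^+2*ga + 5%:R*al^+2*be^+4*de^+2*lm^+2 + 5%:R*al^+3*be^+4*de^+3 - 5%:R*be*de^+4*ga*lm^+4 + be*ga*lm^+4 + 5%:R*be^+2*de^+4*ga^+2*lm^+2 - 5%:R*be^+3*de^+4*ga^+3) (- 4%:R*al*be^+3*de*ga^+3 + 6%:R*al^+2*be^+2*de^+2*ga^+2 - 4%:R*al^+3*be*de^+3*ga + al^+4*be^+4*de^+4 + be^+4*de^+4*ga^+4) h1 h2' h3 h4 hl h5); ring.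
- apply: (@cert6 _ h2 0 _ _ _ _ _ _ _ _ _ _ _ _ _ _ (10%:R*be^+3*de^+4) (- 5%:R*al*ga^+2*lm^+4 + 5%:R*al^+2*de*ga^+2*lm^+2 + 15%:R*al^+3*de^+2*ga^+2) (10%:R*be^+4*de^+3) (- 5%:R*al^+2*be*ga^+2*lm^+2 + 15%:R*al^+2*be^+2*ga^+3 - 5%:R*al^+2*ga*lm^+4) (- 5%:R*al*be*de^+4*ga^+2*lm^+2 - 5%:R*al*be*ga^+2*lm^+2 + 15%:R*al*be^+2*de^+4*ga^+3 + 5%:R*al*be^+2*ga^+3 + 5%:R*al*be^+4*ga*lm^+4 - 5%:R*al*de^+4*ga*lm^+4 + 10%:R*al^+2*be^+3*de*lm^+4 - 5%:R*al^+2*be^+4*de*ga*lm^+2 - 5%:R*al^+2*de*ga*lm^+2 + 10%:R*al^+3*be^+3*de^+2*lm^+2 - 15%:R*al^+3*be^+4*de^+2*ga - 5%:R*al^+3*de^+2*ga + 10%:R*al^+4*be^+3*de^+3 - 10%:R*be*de^+3*ga^+2*lm^+4 + 10%:R*be^+2*de^+3*ga^+3*lm^+2 - 10%:R*be^+3*de^+3*ga^+4) (2%:R*al*be^+3*de^+4 - 5%:R*al*be^+3*de^+4*ga^+4 - al*be^+3*ga^+4 + 4%:R*al^+2*be^+2*de*ga^+3 + 4%:R*al^+3*be*de^+2*ga^+2 - 5%:R*al^+4*be^+4*de^+3*ga - al^+4*de^+3*ga + 2%:R*be^+4*de^+3*ga) h1 h2' h3 h4 hl h5); ring.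
- apply: (@cert6 _ h2 0 _ _ _ _ _ _ _ _ _ _ _ _ _ _ (10%:R*be^+2*de^+3*lm^+2 - 10%:R*be^+3*de^+3*ga) (10%:R*al^+2*ga^+3*lm^+2 + 10%:R*al^+3*de*ga^+3) (- 10%:R*al*be^+3*de^+3 - 10%:R*be^+3*de^+2*lm^+2) (10%:R*al^+3*be*ga^+3 - 10%:R*al^+3*ga^+2*lm^+2) (10%:R*al*be^+2*de^+3 + 10%:R*al*be^+2*de^+3*ga^+4 - 10%:R*al*de^+3*ga^+2*lm^+4 + 10%:R*al^+2*be*de^+4*ga^+3 + 10%:R*al^+2*be*ga^+3 + 10%:R*al^+2*be^+3*ga*lm^+4 - 10%:R*al^+2*be^+4*ga^+2*lm^+2 - 10%:R*al^+2*de^+4*ga^+2*lm^+2 + 10%:R*al^+3*be^+2*de*lm^+4 - 10%:R*al^+3*be^+4*de*ga^+2 - 10%:R*al^+3*de*ga^+2 + 10%:R*al^+4*be^+2*de^+2*lm^+2 - 10%:R*al^+4*be^+3*de^+2*ga - 10%:R*be*de^+2*ga^+3*lm^+4 + 10%:R*be^+2*de^+2*ga^+4*lm^+2 - 10%:R*be^+3*de^+2*ga) (- 8%:R*al*be^+3*de^+3*ga + 2%:R*al^+2*be^+2*de^+4 - 2%:R*al^+2*be^+2*ga^+4 + 8%:R*al^+3*be*de*ga^+3 - 2%:R*al^+4*de^+2*ga^+2 + 2%:R*be^+4*de^+2*ga^+2) h1 h2' h3 h4 hl h5); ring.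
- apply: (@cert6 _ h2 0 _ _ _ _ _ _ _ _ _ _ _ _ _ _ (5%:R*be*de^+2*lm^+4 + 5%:R*be^+2*de^+2*ga*lm^+2 - 15%:R*be^+3*de^+2*ga^+2) (- 10%:R*al^+3*ga^+4) (- 5%:R*al*be^+2*de^+2*lm^+2 - 15%:R*al^+2*be^+2*de^+3 + 5%:R*be^+2*de*lm^+4) (- 10%:R*al^+4*ga^+3) (5%:R*al*be*de^+2*ga^+4*lm^+2 + 5%:R*al*be*de^+2*lm^+2 - 10%:R*al*de^+2*ga^+3*lm^+4 + 5%:R*al^+2*be*de^+3 + 15%:R*al^+2*be*de^+3*ga^+4 - 10%:R*al^+2*de^+3*ga^+3*lm^+2 + 10%:R*al^+3*be^+2*ga*lm^+4 - 10%:R*al^+3*be^+3*ga^+2*lm^+2 + 10%:R*al^+3*be^+4*ga^+3 - 10%:R*al^+3*de^+4*ga^+3 + 5%:R*al^+4*be*de*lm^+4 + 5%:R*al^+4*be^+2*de*ga*lm^+2 - 15%:R*al^+4*be^+3*de*ga^+2 - 5%:R*be*de*ga^+4*lm^+4 + 5%:R*be^+2*de*ga*lm^+2 - 5%:R*be^+3*de*ga^+2) (- 4%:R*al*be^+3*de^+2*ga^+2 - 4%:R*al^+2*be^+2*de^+3*ga + al^+3*be*de^+4 + 5%:R*al^+3*be*de^+4*ga^+4 - 2%:R*al^+3*be*ga^+4 + 5%:R*al^+4*be^+4*de*ga^+3 - 2%:R*al^+4*de*ga^+3 + be^+4*de*ga^+3) h1 h2' h3 h4 hl h5); ring.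
- apply: (@cert6 _ h2 0 _ _ _ _ _ _ _ _ _ _ _ _ _ _ (5%:R*be*de*ga*lm^+4 - 5%:R*be^+2*de*ga^+2*lm^+2 + 5%:R*be^+3*de*ga^+3 + de*lm^+6) 0 (5%:R*al*be*de*lm^+4 + 5%:R*al^+2*be*de^+2*lm^+2 + 5%:R*al^+3*be*de^+3 - be*lm^+6) 0 (10%:R*al*be*de*ga*lm^+2 - 15%:R*al*be^+2*de*ga^+2 - 5%:R*al*de*ga^+4*lm^+4 + al*de*lm^+4 + 15%:R*al^+2*be*de^+2*ga - 5%:R*al^+2*de^+2*ga^+4*lm^+2 - 5%:R*al^+3*de^+3*ga^+4 + 5%:R*al^+4*be*ga*lm^+4 - 5%:R*al^+4*be^+2*ga^+2*lm^+2 + 5%:R*al^+4*be^+3*ga^+3 - be*ga*lm^+4) (4%:R*al*be^+3*de*ga^+3 - 6%:R*al^+2*be^+2*de^+2*ga^+2 + 4%:R*al^+3*be*de^+3*ga - al^+4*be^+4*ga^+4 - al^+4*de^+4*ga^+4) h1 h2' h3 h4 hl h5); ring.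
- apply: (@cert6 _ h2 0 _ _ _ _ _ _ _ _ _ _ _ _ _ _ (ga*lm^+6) 0 (- al*lm^+6) 0 0 0 h1 h2' h3 h4 hl h5); ring.
Qed.

Lemma classG (a b c d : K) : is_aut_mx ('X^5 - 'X) (mx2 a b c d) -> exists2 x, valid x & mx2 a b c d = gmat x.
Proof.
have h4' := h4.
move=> /autg_eq [nzD [[E0 E1 E2 E3 E4] [E5 E6]]].
move: E0 E1 E2 E3 E4 E5 E6; rewrite /Ec => E0 E1 E2 E3 E4 E5 E6.
have [a0|anz] := eqVneq a 0.
  subst a.
  move: nzD; rewrite mul0r sub0r oppr_eq0 mulf_eq0 negb_or => /andP [bnz cnz].
  have hb : c^+3 = - b.
    have key : b * c^+2 * (c^+3 + b) = 0 by apply: (@cert1 _ h2 0 _ _ _ _ (- 1%:R) E5); ring.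
    have := mulx0 key ltac:(nz).
    by move/eqP; rewrite addr_eq0 => /eqP.
  have hc : b^+3 = - c.
    have key : b^+2 * c * (b^+3 + c) = 0 by apply: (@cert2 _ h2 0 _ _ _ _ _ _ (1%:R) (b*c*d^+4) E1 h5); ring.
    have := mulx0 key ltac:(nz).
    by move/eqP; rewrite addr_eq0 => /eqP.
  have [C eC] : exists C, c = b * C by exists (c / b); rewrite mulrC divfK.
  have [Dd eD] : exists Dd, d = b * Dd by exists (d / b); rewrite mulrC divfK.
  subst c d.
  have Cnz : C != 0 by apply: contraNneq cnz => ->; rewrite mulr0.
  have hCb : C = - b^+2.
    have key : b * (C + b^+2) = 0 by apply: (@cert1 _ h2 0 _ _ _ _ (1%:R) hc); ring.
    have := mulx0 key ltac:(nz).
    by move/eqP; rewrite addr_eq0 => /eqP.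
  have hbC : b^+2 * C^+3 = -1.
    have key : b * (b^+2 * C^+3 + 1) = 0 by apply: (@cert1 _ h2 0 _ _ _ _ (1%:R) hb); ring.
    have := mulx0 key ltac:(nz).
    by move/eqP; rewrite addr_eq0 => /eqP.
  have hC4 : C^+4 = 1 by apply: (@cert2 _ h2 0 _ _ _ _ _ _ (C^+3) (- 1%:R) hCb hbC); ring.
  have hD5 : Dd^+5 = Dd.
    have key : b^+6 * (Dd^+5 - Dd) = 0 by apply: (@cert1 _ h2 0 _ _ _ _ (- 1%:R) E0); ring.
    have := mulx0 key ltac:(nz).
    by move/eqP; rewrite subr_eq0 => /eqP.
  have hC5 : C^+5 = C by rewrite exprS hC4 mulr1.
  have [g hg] := F5root hC5; have [dl hdl] := F5root hD5.
  have gnz : (g : nat) != 0%N by apply: contraNneq Cnz => g0; rewrite hg g0.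
  pose x0 : D240 := (true, false, ord0, g, dl).
  have v0 : valid x0 by rewrite /valid /validn /= gnz.
  have hl0 := lam_sq v0.
  rewrite /alx /bex /xkd /xc /xd /= mul0r sub0r mul1r -hg in hl0.
  have hb2 : b^+2 = lamx x0 ^+ 2 by rewrite hl0 hCb opprK.
  have [sg hsg] := sign_sq hb2.
  exists (sg, false, ord0, g, dl); first by rewrite /valid /validn /= gnz.
  rewrite /gmat /lamx /alx /bex /xsg /xkd /xc /xd /xb /=.
  rewrite /lamx /= mul1r in hsg.
  by rewrite -hsg -hg -hdl mulr0 mulr1.
have [B eB'] : exists B, b = a * B by exists (b / a); rewrite mulrC divfK.
have [C eC] : exists C, c = a * C by exists (c / a); rewrite mulrC divfK.
have [Dd eD] : exists Dd, d = a * Dd by exists (d / a); rewrite mulrC divfK.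
subst b c d.
have Dlnz : Dd - B * C != 0.
  by move: nzD; rewrite (_ : a * (a * Dd) - a * B * (a * C) = a^+2 * (Dd - B * C)); [rewrite mulf_eq0 negb_or => /andP [_ ->] | ring].
have hC : C^+5 = C.
  have key : a^+6 * (C^+5 - C) = 0 by apply: (@cert1 _ h2 0 _ _ _ _ (- 1%:R) E6); ring.
  have := mulx0 key ltac:(nz).
  by move/eqP; rewrite subr_eq0 => /eqP.
have ha2 : a^+2 = Dd - B * C.
  have key : a^+4 * (Dd - B * C) * (a^+2 - (Dd - B * C)) = 0 by apply: (@cert3 _ h2 0 _ _ _ _ _ _ _ _ (1%:R) (B*a^+6) (- B*C*a^+6 + C^+4*Dd*a^+6) E5 hC h5); ring.
  have := mulx0 key ltac:(nz).
  by move/eqP; rewrite subr_eq0 => /eqP.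
have K3 : Dd^+5 - Dd = C * (B^+5 - B).
  have key : a^+6 * (Dd^+5 - Dd - C * (B^+5 - B)) = 0 by apply: (@cert3 _ h2 0 _ _ _ _ _ _ _ _ (- 1%:R) (- 5%:R*B*C*Dd^+4*a^+4 - 5%:R*B*C*Dd^+5*a^+2 - 5%:R*B*C*Dd^+6 + B*C*a^+4 + 5%:R*B^+2*C^+2*Dd^+4*a^+2 + 10%:R*B^+2*C^+2*Dd^+5 - 5%:R*B^+3*C^+3*Dd^+4 + 5%:R*B^+4*Dd*a^+4 + 5%:R*B^+4*Dd^+2*a^+2 + 5%:R*B^+4*Dd^+3 - 5%:R*B^+5*C*Dd*a^+2 - 10%:R*B^+5*C*Dd^+2 + 5%:R*B^+6*C^+2*Dd - Dd*a^+4) (- B*C*Dd^+7 + 3%:R*B^+2*C^+2*Dd^+6 - 3%:R*B^+3*C^+3*Dd^+5 + B^+4*C^+4*Dd^+4 + B^+4*Dd^+4 - 3%:R*B^+5*C*Dd^+3 + 3%:R*B^+6*C^+2*Dd^+2 - B^+7*C^+3*Dd) E1 ha2 h5); ring.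
  have := mulx0 key ltac:(nz).
  by move/eqP; rewrite subr_eq0 => /eqP.
have K4 : B^+5 * Dd = B * Dd^+5.
  have key : a^+6 * (B^+5 * Dd - B * Dd^+5) = 0 by apply: (@cert1 _ h2 0 _ _ _ _ (1%:R) E0); ring.
  have := mulx0 key ltac:(nz).
  by move/eqP; rewrite subr_eq0 => /eqP.
have [hB5 hD5] : B^+5 = B /\ Dd^+5 = Dd.
  have [B0|Bnz] := eqVneq B 0.
    have e0 : (0 : K)^+5 = 0 by rewrite expr0n.
    subst B; rewrite e0 subrr mulr0 in K3.
    by split; [rewrite e0 | apply/eqP; rewrite -subr_eq0 K3].
  have [D0|Dnz] := eqVneq Dd 0.
    have e0 : (0 : K)^+5 = 0 by rewrite expr0n.
    subst Dd; rewrite e0 subrr in K3.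
    have Cnz : C != 0 by apply: contraNneq Dlnz => ->; rewrite mulr0 subrr.
    split; last by rewrite e0.
    by apply/eqP; rewrite -subr_eq0; apply/eqP; apply: (mulx0 (esym K3)) => //.
  have hB4 : B^+4 = Dd^+4.
    have key : B * Dd * (B^+4 - Dd^+4) = 0 by apply: (@cert1 _ h2 0 _ _ _ _ (1%:R) K4); ring.
    have := mulx0 key ltac:(nz).
    by move/eqP; rewrite subr_eq0 => /eqP.
  have hD4 : Dd^+4 = 1.
    have key : (Dd - C * B) * (Dd^+4 - 1) = 0.
      rewrite mulrC. apply: (@cert2 _ h2 0 _ _ _ _ _ _ (1%:R) (B*C) K3 hB4); ring.
    have := mulx0 key ltac:(by rewrite mulrC).
    by move/eqP; rewrite subr_eq0 => /eqP.
  by split; rewrite exprS ?hB4 hD4 mulr1.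
have [bt hbt] := F5root hB5; have [g hg] := F5root hC; have [dl hdl] := F5root hD5.
have eDl : Dd - B * C = ((dl + 4 * bt * g) %% 5)%:R.
  rewrite natmod5 natrD !natrM hbt hg hdl.
  move: (bt%:R : K) (g%:R : K) (dl%:R : K) => be ga de.
  apply: (@cert1 _ h2 0 _ _ _ _ (- be*ga) h5); ring.
pose x0 : D240 := (true, true, bt, g, dl).
have v0 : valid x0.
  rewrite /valid /validn /=; apply/negP => /eqP n0.
  by move: Dlnz; rewrite eDl n0 eqxx.
have hl0 := lam_sq v0.
rewrite /alx /bex /xkd /xb /xc /xd /= mul1r -hbt -hg -hdl -ha2 in hl0.
have [sg hsg] := sign_sq (esym hl0).
exists (sg, true, bt, g, dl); first exact: v0.
rewrite /gmat /lamx /alx /bex /xsg /xkd /xc /xd /xb /=.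
rewrite /lamx /= mul1r in hsg.
by rewrite -hsg -hbt -hg -hdl mulr1.
Qed.

Lemma eB_aut x : valid x -> is_aut_mx ('X^5 + 'X) (eB x).
Proof.
move=> hv; rewrite /eB; apply/xfer.
have -> : - (lamx x * (xc x)%:R * z^+3) * z = lamx x * (xc x)%:R.
  move: (lamx x) ((xc x)%:R : K) => lm ga.
  apply: (@cert1 _ h2 0 _ _ _ _ (- ga*lm) hz); ring.
exact: revG hv.
Qed.

Lemma eB_class (a b c d : K) : is_aut_mx ('X^5 + 'X) (mx2 a b c d) -> exists2 x, valid x & mx2 a b c d = eB x.
Proof.
move=> H.
have eb : b = (- (b * z^+3)) * z by apply: (@cert1 _ h2 0 _ _ _ _ (b) hz); ring.
have H' : is_aut_mx ('X^5 + 'X) (mx2 a ((- (b * z^+3)) * z) c d) by rewrite -eb.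
move/xfer/classG: H' => [x hv e].
exists x => //; rewrite /eB; rewrite /gmat in e.
move/mx2_inj: e => [ea ebe ec ed].
rewrite -ea -ed; congr mx2.
- move: ebe; move: (lamx x) (bex x) => lm be hbe.
  apply/esym; move/esym: hbe => hbe. apply: (@cert2 _ h2 0 _ _ _ _ _ _ (z) (- b) hbe hz); ring.
- move: ec; move: (lamx x) ((xc x)%:R : K) => lm ga hga.
  apply/esym; move/esym: hga => hga. apply: (@cert2 _ h2 0 _ _ _ _ _ _ (- z^+3) (- c) hga hz); ring.
Qed.

Lemma eB_inj : {in [set x | valid x] &, injective eB}.
Proof.
have znz := znz.
move=> x y; rewrite !inE => hx hy /mx2_inj [e1 e2 e3 e4].
have e2' := mulIf znz e2.
have e3' : lamx x * (xc x)%:R = lamx y * (xc y)%:R.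
  by apply: (mulIf (zpnz 3)); apply: oppr_inj.
clear e2 e3.
have lx := lam_nz hx; have ly := lam_nz hy.
have [ex _] := det_ok hx; have [ey _] := det_ok hy.
have sgn (s s' : bool) (u : K) : u != 0 -> (if s then 1 else -1) * u = (if s' then 1 else -1) * u -> s = s'.
  move=> unz; case: s; case: s' => //= /eqP; rewrite ?mulN1r ?mul1r.
  - rewrite -addr_eq0 -mulr2n -mulr_natl mulf_eq0 (negbTE h2) (negbTE unz) //.
  - rewrite eq_sym -addr_eq0 -mulr2n -mulr_natl mulf_eq0 (negbTE h2) (negbTE unz) //.
move: x y hx hy e1 e2' e3' e4 lx ly ex ey => [[[[sx kx] bx] cx] dx] [[[[sy ky] by'] cy] dy].
rewrite /valid /validn /lamx /alx /bex /xsg /xkd /xb /xc /xd /=.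
case: kx; case: ky => hx hy e1 e2 e3 e4 lx ly ex ey.
- rewrite !mulr1 in e1; rewrite e1 in e2 e3 e4.
  have eb := nat_inj5 (ltn_ord bx) (ltn_ord by') (mulfI ly e2).
  have ec := nat_inj5 (ltn_ord cx) (ltn_ord cy) (mulfI ly e3).
  have ed := nat_inj5 (ltn_ord dx) (ltn_ord dy) (mulfI ly e4).
  have ebo : bx = by' by apply: val_inj.
  have eco : cx = cy by apply: val_inj.
  have edo : dx = dy by apply: val_inj.
  subst by' cy dy.
  have hn : (0 < (dx + 4 * bx * cx) %% 5 < 5)%N by rewrite ltn_mod andbT lt0n.
  by rewrite (sgn _ _ _ (sig5_nz hn) e1).
- by move: lx; rewrite -(mulr1 (_ * _)) e1 mulr0 eqxx.
- by move: ly; rewrite -(mulr1 (_ * _)) -e1 mulr0 eqxx.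
- rewrite !mulr1 in e2; rewrite e2 in e3 e4.
  move: hx hy => /andP [/eqP hbx hcx] /andP [/eqP hby hcy].
  have ec := nat_inj5 (ltn_ord cx) (ltn_ord cy) (mulfI ly e3).
  have ed := nat_inj5 (ltn_ord dx) (ltn_ord dy) (mulfI ly e4).
  have ebo : bx = by' by apply: val_inj; rewrite /= hbx hby.
  have eco : cx = cy by apply: val_inj.
  have edo : dx = dy by apply: val_inj.
  subst by' cy dy.
  have hn : (0 < (4 * cx) %% 5 < 5)%N.
    have hc5 := ltn_ord cx; by rewrite ltn_mod andbT lt0n; apply/negP => /dvdnP [k hk]; move: hcx; lia.
  by rewrite (sgn _ _ _ (sig5_nz hn) e2).
Qed.
End C5.
End ClassI.


Lemma exists_z (F : finFieldType) : (8 %| #|F|.-1)%N -> exists z : F, z^+4 = -1.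
Proof.
move=> h8.
have /cyclicP [g defG] := field_unit_group_cyclic [set: {unit F}]%G.
have og : #[g]%g = #|F|.-1 by rewrite orderE -defG card_finField_unit.
pose m := (#|F|.-1 %/ 8)%N.
have hm : #|F|.-1 = (m * 8)%N by rewrite divnK.
have mpos : (0 < m)%N.
  have : (0 < #|F|.-1)%N by rewrite -card_finField_unit cardG_gt0.
  by rewrite hm muln_gt0 => /andP [].
pose y : F := val (g ^+ m)%g.
have y8 : y ^+ 8 = 1 by rewrite /y -FinRing.val_unitX -expgM -hm -og expg_order.
have y4 : y ^+ 4 != 1.
  rewrite /y -FinRing.val_unitX -expgM; apply/eqP => h.
  have : (g ^+ (m * 4))%g = 1%g by apply: val_inj; rewrite h.
  move/eqP; rewrite -order_dvdn og hm.
  by rewrite dvdn_pmul2l // .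
exists y.
have : (y^+4 - 1) * (y^+4 + 1) = 0.
  have -> : (y^+4 - 1) * (y^+4 + 1) = y^+8 - 1 by ring.
  by rewrite y8 subrr.
by move/eqP; rewrite mulf_eq0 subr_eq0 (negbTE y4) /= addr_eq0 => /eqP.
Qed.

Lemma card_from_class (F : finFieldType) (f : {poly F}) (D : finType) (P : pred D) (e : D -> 'M[F]_2) :
  (forall M, is_aut_mx f M <-> exists2 x, P x & M = e x) -> {in [set x | P x] &, injective e} ->
  #|aut_set f| = #|[set x | P x]|.
Proof.
move=> H inj.
have -> : aut_set f = e @: [set x | P x].
  apply/setP => M; rewrite inE; apply/idP/imsetP.
  - by move/H => [x hx ->]; exists x; rewrite ?inE.
  - by move=> [x hx ->]; apply/H; exists x => //; move: hx; rewrite inE.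
exact: card_in_imset.
Qed.

Lemma map_mx2 (F L : fieldType) (iota : {rmorphism F -> L}) (a b c d : F) :
  map_mx iota (mx2 a b c d) = mx2 (iota a) (iota b) (iota c) (iota d).
Proof. by apply/matrixP => i j; rewrite !mxE; case: ifP; case: ifP. Qed.

Section LPart.
Variables (F : finFieldType) (L : fieldType) (iota : {rmorphism F -> L}) (D : finType) (P : pred D).
Variables (eF : D -> 'M[F]_2) (eL : D -> 'M[L]_2) (zL : L).
Hypotheses (znz : zL != 0)
  (clF : forall M, is_aut_mx ('X^5 + 'X : {poly F}) M <-> exists2 x, P x & M = eF x)
  (clL : forall M, is_aut_mx ('X^5 + 'X : {poly L}) M <-> exists2 x, P x & M = eL x)
  (hmap : forall x, map_mx iota (eF x) = eL x)
  (tr : forall a b c d, is_aut_mx ('X^5 + 'X : {poly L}) (mx2 a (b*zL) c d) <->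
          is_aut_mx ('X^5 - 'X) (mx2 a b (c*zL) d)).

Definition cnj (M : 'M[L]_2) := mx2 (M 0 0) (M 0 1 / zL) (M 1 0 * zL) (M 1 1).

Lemma cnjM A B : cnj (A *m B) = cnj A *m cnj B.
Proof.
rewrite (mx2_eta A) (mx2_eta B) mul_mx2 /cnj !mx2E00 !mx2E01 !mx2E10 !mx2E11 mul_mx2.
by congr mx2; field.
Qed.

Lemma cnj_inj : injective cnj.
Proof.
move=> A B /mx2_inj [e1 e2 e3 e4].
rewrite (mx2_eta A) (mx2_eta B) e1 e4 (mulIf znz e3); congr mx2.
by apply: (mulIf (invr_neq0 znz)).
Qed.

Lemma Lpart : all_auts_rational ('X^5 + 'X) iota /\ aut_iso_to ('X^5 + 'X : {poly F}) ('X^5 - 'X : {poly L}).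
Proof.
have mapf : map_poly iota ('X^5 + 'X) = 'X^5 + 'X by rewrite rmorphD /= map_polyXn map_polyX.
split.
  move=> M; rewrite mapf => /clL [x hx ->]; exists (eF x); last by rewrite hmap.
  by rewrite inE; apply/clF; exists x.
exists (fun N => cnj (map_mx iota N)); split.
- by move=> M N _ _; rewrite map_mxM cnjM.
- by move=> M N _ _ /cnj_inj /map_mx_inj.
move=> M; split.
  rewrite (mx2_eta M); set a := M 0 0; set b := M 0 1; set c := M 1 0; set d := M 1 1.
  rewrite -{1}(divfK znz c) => /tr /clL [x hx ex].
  exists (eF x); first by rewrite inE; apply/clF; exists x.
  by rewrite hmap -ex /cnj !mx2E00 !mx2E01 !mx2E10 !mx2E11 mulfK // divfK.
move=> [N]; rewrite inE => /clF [x hx ->] ->.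
rewrite hmap.
have := (proj2 (clL (eL x))) (ex_intro2 _ _ x hx erefl).
rewrite (mx2_eta (eL x)) /cnj !mx2E00 !mx2E01 !mx2E10 !mx2E11.
by rewrite -{1}(divfK znz (eL x 0 1)) => /tr.
Qed.
End LPart.

Section Maps.
Variables (F L : fieldType) (iota : {rmorphism F -> L}) (z r : F).

Lemma map_eA x : map_mx iota (eA z r x) = eA (iota z) (iota r) x.
Proof.
case: x => [[k m]|[m j]] /=; first case: ifP => _;
  by rewrite map_mx2 ?(rmorph0, rmorphXn, rmorphM, rmorphN, rmorph_nat, fmorphV).
Qed.

Lemma map_sig5 n : iota (sig5 z r n) = sig5 (iota z) (iota r) n.
Proof.
by case: n => [|[|[|[|[|n]]]]]; rewrite /sig5 /= ?(rmorph0, rmorph1, rmorphM, rmorphXn, rmorph_nat).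
Qed.

Lemma map_eB x : map_mx iota (eB z r x) = eB (iota z) (iota r) x.
Proof.
rewrite /eB /lamx /alx /bex map_mx2 !(rmorphM, rmorphN, rmorphXn, rmorph_nat, map_sig5).
by case: xsg; case: xkd; rewrite ?(rmorph1, rmorph0, rmorphN, rmorph_nat).
Qed.
End Maps.

Unset Implicit Arguments.

Theorem mainTheorem2 (F : finFieldType) (p : nat) :
  prime p -> p != 2%N -> p \in [pchar F] ->
  (8 %| #|F|.-1)%N -> (exists s : F, s ^+ 2 = 2%:R) ->
  let f : {poly F} := 'X^5 + 'X in
  ((p != 3%N) -> (p != 5%N) ->
     #|aut_set f| = 48%N /\
     forall (L : closedFieldType) (iota : {rmorphism F -> L}),
       is_alg_closure iota ->
       all_auts_rational f iota /\ aut_iso_to f ('X^5 - 'X : {poly L}))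
  /\
  ((p = 5%N) ->
     #|aut_set f| = 240%N /\
     forall (L : closedFieldType) (iota : {rmorphism F -> L}),
       is_alg_closure iota ->
       all_auts_rational f iota /\ aut_iso_to f ('X^5 - 'X : {poly L})).
Proof.
move=> pr p2 pc h8 [s hs] f.
have [z hz] := exists_z h8.
have h2 : (2%:R : F) != 0 by rewrite -(dvdn_pcharf pc) dvdn_prime2.
have Lh (L : fieldType) (iota : {rmorphism F -> L}) :
    [/\ iota z ^+ 4 = -1, iota s ^+ 2 = 2%:R & (2%:R : L) != 0].
  split; first by rewrite -rmorphXn hz rmorphN1.
    by rewrite -rmorphXn hs rmorph_nat.
  by rewrite -(rmorph_nat iota) fmorph_eq0.
split.
  move=> p3 p5.
  have h5 : (5%:R : F) != 0 by rewrite -(dvdn_pcharf pc) dvdn_prime2.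
  have clF (K : fieldType) (z' r' : K) (hz' : z'^+4 = -1) (hr' : r'^+2 = 2%:R) (h2' : (2%:R : K) != 0)
      (h5' : (5%:R : K) != 0) M :
      is_aut_mx ('X^5 + 'X) M <-> exists2 x, xpredT x & M = eA z' r' x.
    split; last by move=> [x _ ->]; exact: eA_aut.
    by rewrite (mx2_eta M) => /(classI_fwd hz' hr' h2' h5') [x ->]; exists x.
  split.
    rewrite (card_from_class (clF _ _ _ hz hs h2 h5)); last by move=> x y _ _ /(eA_inj hz hs h2).
    rewrite (_ : [set x | xpredT x] = setT); last by apply/setP => x; rewrite !inE.
    by rewrite cardsT card_sum !card_prod !card_ord.
  move=> L iota _.
  have [hzL hrL h2L] := Lh L iota.
  have h5L : (5%:R : L) != 0 by rewrite -(rmorph_nat iota) fmorph_eq0.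
  apply: (Lpart (zL := iota z)).
  - by rewrite fmorph_eq0 (znz hz hs h2).
  - exact: clF hz hs h2 h5.
  - exact: clF hzL hrL h2L h5L.
  - exact: map_eA.
  - exact: xfer hzL hrL h2L.
move=> p5; subst p.
have h5 : (5%:R : F) = 0 by apply/eqP; rewrite -(dvdn_pcharf pc).
have clF (K : fieldType) (z' r' : K) (hz' : z'^+4 = -1) (hr' : r'^+2 = 2%:R) (h2' : (2%:R : K) != 0)
    (h5' : (5%:R : K) = 0) M :
    is_aut_mx ('X^5 + 'X) M <-> exists2 x, valid x & M = eB z' r' x.
  split; last by move=> [x hx ->]; exact: eB_aut.
  by rewrite (mx2_eta M) => /(eB_class hz' hr' h2' h5') [x hx ->]; exists x.
split.
  rewrite (card_from_class (clF _ _ _ hz hs h2 h5)); last exact: (eB_inj hz hs h2 h5).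
  exact: card_valid.
move=> L iota _.
have [hzL hrL h2L] := Lh L iota.
have h5L : (5%:R : L) = 0 by rewrite -(rmorph_nat iota) h5 rmorph0.
apply: (Lpart (zL := iota z)).
- by rewrite fmorph_eq0 (znz hz hs h2).
- exact: clF hz hs h2 h5.
- exact: clF hzL hrL h2L h5L.
- exact: map_eB.
- exact: xfer hzL hrL h2L.
Qed.
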